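(* Any Turing recognizable language can be weakly verified by a rational-valued 2ADfA with arbitrary bounded error $\epsilon$. Moreover, the protocol achieves perfect completeness.
   Context: An affine state of an $m$-state affine register is a vector $v\in\mathbb{R}^m$ whose entries sum to $1$; affine operators are real matrices whose columns each sum to $1$; weighting observes basis state $e_j$ with probability $|v_j|/\|v\|_1$ and collapses the register to $e_j$. A 2ADfA is a two-way deterministic finite automaton on the read-only input $¢ w\$$ (left end-marker ¢, right end-marker \$), whose head may move left, right or stay, equipped with finitely many affine registers; at each step, depending on the deterministic state and scanned symbol, each register is either updated by an affine operator or weighted, and then the deterministic state and head move are determined by the state, symbol and weighting outcomes; it halts upon entering an accepting or rejecting state. Rational-valued means all affine operators have rational entries. The 2ADfA is the verifier in an Arthur–Merlin proof system: it communicates with an all-powerful prover through a communication cell and reveals its deterministic states, head moves and weighting outcomes (public coins). Weak verification with error $\epsilon<1/2$ (rational): there is a prover such that every $w\in L$ is accepted with probability at least $1-\epsilon$, and for every $w\notin L$ and every prover, $w$ is accepted with probability at most $\epsilon$ (non-halting allowed). Perfect completeness means every $w\in L$ is accepted with probability $1$. *)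

(* Defs.v *)
(* All quantities of the verifier are rationals (rat):
   "rational-valued" 2ADfA = all affine operators (and initial affine states)
   have rational entries; then all register contents and all branch
   probabilities are rationals as well. *)
From HB Require Import structures.
From mathcomp Require Import all_boot all_order all_algebra.
Set Implicit Arguments. Unset Strict Implicit. Unset Printing Implicit Defensive.
Import Order.TTheory GRing.Theory Num.Theory.
Local Open Scope ring_scope.

Inductive tm_move := TML | TMR.

Record TM (Sigma : finType) := {
  tm_state : finType;
  tm_tape : finType;
  tm_blank : tm_tape;
  tm_inp : Sigma -> tm_tape;
  tm_inp_inj : injective tm_inp;
  tm_inp_blank : forall a, tm_inp a != tm_blank;
  tm_start : tm_state;
  tm_acc : tm_state;
  tm_rej : tm_state;
  tm_acc_rej : tm_acc != tm_rej;
  tm_delta : tm_state -> tm_tape -> tm_state * tm_tape * tm_move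
}.

Record tm_config (Sigma : finType) (M : TM Sigma) := TMConfig {
  tmc_state : tm_state M;
  tmc_tape : int -> tm_tape M;
  tmc_head : int
}.

Definition tm_init (Sigma : finType) (M : TM Sigma) (w : seq Sigma) : tm_config M :=
  TMConfig (tm_start M)
    (fun i : int => match i with
                    | Posz n => if onth w n is Some a then tm_inp M a else tm_blank M
                    | Negz _ => tm_blank M
                    end)
    0.

Definition tm_step (Sigma : finType) (M : TM Sigma) (c : tm_config M) : tm_config M :=
  if (tmc_state c == tm_acc M) || (tmc_state c == tm_rej M) then c else
  let: (q', b, d) := tm_delta (tmc_state c) (tmc_tape c (tmc_head c)) in
  TMConfig q'
    (fun i => if i == tmc_head c then b else tmc_tape c i)
    (if d is TML then tmc_head c - 1 else tmc_head c + 1).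

Definition tm_accepts (Sigma : finType) (M : TM Sigma) (w : seq Sigma) : Prop :=
  exists n : nat, tmc_state (iter n (@tm_step Sigma M) (tm_init M w)) = tm_acc M.

Definition TM_recognizable (Sigma : finType) (L : seq Sigma -> Prop) : Prop :=
  exists M : TM Sigma, forall w, L w <-> tm_accepts M w.

Inductive tsym (Sigma : Type) := LEnd | REnd | Sym of Sigma.
Arguments LEnd {Sigma}. Arguments REnd {Sigma}.

Inductive hmove := MoveL | MoveS | MoveR.

Inductive raction (n : nat) := Apply of 'M[rat]_n | Weigh.
Arguments Weigh {n}.

Definition affine_vec n (v : 'cV[rat]_n) : Prop := \sum_i v i ord0 = 1.
Definition affine_op n (A : 'M[rat]_n) : Prop := forall j, \sum_i A i j = 1.

Record Verifier (Sigma : finType) := {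
  v_state : finType;
  v_comm : finType;
  v_reg : finType;
  v_dim : v_reg -> nat;
  v_init_reg : forall r, 'cV[rat]_(v_dim r);
  v_start : v_state;
  v_acc : pred v_state;
  v_rej : pred v_state;
  v_act : v_state -> tsym Sigma -> v_comm -> forall r, raction (v_dim r);
  (* next state and head move, depending moreover on the weighting outcomes
     (None for registers that were not weighted) *)
  v_next : v_state -> tsym Sigma -> v_comm ->
           {dffun forall r : v_reg, option 'I_(v_dim r)} -> v_state * hmove
}.

Arguments v_state {Sigma} v.
Arguments v_comm {Sigma} v.
Arguments v_reg {Sigma} v.
Arguments v_dim {Sigma} v r.
Arguments v_init_reg {Sigma} v r.
Arguments v_start {Sigma} v.
Arguments v_acc {Sigma} v.
Arguments v_rej {Sigma} v.
Arguments v_act {Sigma} v.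
Arguments v_next {Sigma} v.

Definition outcome (Sigma : finType) (V : Verifier Sigma) : finType :=
  {dffun forall r : v_reg V, option 'I_(v_dim V r)}.

Definition wf_verifier (Sigma : finType) (V : Verifier Sigma) : Prop :=
  (forall r, affine_vec (v_init_reg V r)) /\
  (forall q a g r, match v_act V q a g r with Apply A => affine_op A | Weigh => True end) /\
  (forall q, ~~ (v_acc V q && v_rej V q)).

Definition halted (Sigma : finType) (V : Verifier Sigma) (q : v_state V) : bool :=
  v_acc V q || v_rej V q.

(* public information of one step: state, head position, prover's symbol,
   weighting outcomes *)
Definition pub_step (Sigma : finType) (V : Verifier Sigma) : Type :=
  (v_state V * nat * v_comm V * outcome V)%type.

(* a (deterministic, all-powerful) prover: sees the input and the public history *)
Definition prover (Sigma : finType) (V : Verifier Sigma) : Type :=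
  seq Sigma -> seq (pub_step V) -> v_comm V.

Record vconfig (Sigma : finType) (V : Verifier Sigma) := VConfig {
  cf_state : v_state V;
  cf_head : nat;
  cf_regs : forall r, 'cV[rat]_(v_dim V r);
  cf_hist : seq (pub_step V)
}.

(* symbol at position i of  ¢ w $  (positions 0 .. size w + 1) *)
Definition tape_at (Sigma : finType) (w : seq Sigma) (i : nat) : tsym Sigma :=
  if i == 0%N then LEnd else if onth w i.-1 is Some a then Sym a else REnd.

(* the head never leaves the end-markers *)
Definition move_head (Sigma : finType) (w : seq Sigma) (i : nat) (m : hmove) : nat :=
  match m with
  | MoveL => i.-1
  | MoveS => i
  | MoveR => minn i.+1 (size w).+1
  end.

Definition l1norm n (v : 'cV[rat]_n) : rat := \sum_i `|v i ord0|.

Definition out_prob (Sigma : finType) (V : Verifier Sigma)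
  (acts : forall r, raction (v_dim V r)) (regs : forall r, 'cV[rat]_(v_dim V r))
  (o : outcome V) : rat :=
  \prod_(r : v_reg V)
    match acts r with
    | Apply _ => if o r is None then 1 else 0
    | Weigh => if o r is Some j then `|regs r j ord0| / l1norm (regs r) else 0
    end.

Definition upd_reg n (a : raction n) (oj : option 'I_n) (v : 'cV[rat]_n) : 'cV[rat]_n :=
  match a with
  | Apply A => A *m v
  | Weigh => if oj is Some j then delta_mx j ord0 else v
  end.

Definition vinit (Sigma : finType) (V : Verifier Sigma) : vconfig V :=
  VConfig (v_start V) 0 (v_init_reg V) [::].

(* one step of a probabilistic branch (configuration, probability) *)
Definition branch_step (Sigma : finType) (V : Verifier Sigma) (P : prover V)
  (w : seq Sigma) (b : vconfig V * rat) : seq (vconfig V * rat) :=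
  let: (c, p) := b in
  if halted (cf_state c) then [:: b] else
  let a := tape_at w (cf_head c) in
  let g := P w (cf_hist c) in
  let acts := v_act V (cf_state c) a g in
  [seq (let: (q', m) := v_next V (cf_state c) a g o in
        VConfig q' (move_head w (cf_head c) m)
          (fun r => upd_reg (acts r) (o r) (cf_regs c r))
          (rcons (cf_hist c) (cf_state c, cf_head c, g, o)),
        p * out_prob acts (cf_regs c) o) | o <- enum (outcome V)].

Definition vdist (Sigma : finType) (V : Verifier Sigma) (P : prover V)
  (w : seq Sigma) (t : nat) : seq (vconfig V * rat) :=
  iter t (fun s => flatten [seq branch_step P w b | b <- s]) [:: (vinit V, 1)].

Definition acc_prob_by (Sigma : finType) (V : Verifier Sigma) (P : prover V)
  (w : seq Sigma) (t : nat) : rat :=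
  \sum_(b <- vdist P w t | v_acc V (cf_state b.1)) b.2.

(* acceptance probability (the limit of the nondecreasing acc_prob_by) is >= p / <= p *)
Definition acc_prob_ge (Sigma : finType) (V : Verifier Sigma) (P : prover V)
  (w : seq Sigma) (p : rat) : Prop :=
  forall d : rat, 0 < d -> exists t, p - d <= acc_prob_by P w t.

Definition acc_prob_le (Sigma : finType) (V : Verifier Sigma) (P : prover V)
  (w : seq Sigma) (p : rat) : Prop :=
  forall t, acc_prob_by P w t <= p.

Definition weakly_verifies_perfect (Sigma : finType) (V : Verifier Sigma)
  (L : seq Sigma -> Prop) (eps : rat) : Prop :=
  (exists P : prover V, forall w, L w -> acc_prob_ge P w 1) /\
  (forall w, ~ L w -> forall P : prover V, acc_prob_le P w eps).

(* Main.v *)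
From HB Require Import structures.
Require Import Defs.
From mathcomp Require Import all_boot all_order all_algebra.
From mathcomp Require Import zify ring lra.
Set Implicit Arguments. Unset Strict Implicit. Unset Printing Implicit Defensive.
Import Order.TTheory GRing.Theory Num.Theory.
Local Open Scope ring_scope.
Section TMPart.
Variables (Sigma : finType) (M : TM Sigma).

Definition C : finType := (tm_tape M * option (tm_state M))%type.
Definition Bc : C := (tm_blank M, None).
Definition hlt (q : tm_state M) : bool := (q == tm_acc M) || (q == tm_rej M).

Definition inR (l : C) : option (tm_state M) :=
  if l.2 is Some q then
    (if hlt q then None else
     let: (q', _, d) := tm_delta q l.1 in if d is TMR then Some q' else None)
  else None.
Definition inL (r : C) : option (tm_state M) :=
  if r.2 is Some q then
    (if hlt q then None else
     let: (q', _, d) := tm_delta q r.1 in if d is TML then Some q' else None)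
  else None.

Definition CA (l m r : C) : C :=
  if m.2 is Some q then (if hlt q then m else ((tm_delta q m.1).1.2, None))
  else if inR l is Some q' then (m.1, Some q')
  else if inL r is Some q' then (m.1, Some q') else m.

Definition cellAt (c : tm_config M) (i : int) : C :=
  (tmc_tape c i, if i == tmc_head c then Some (tmc_state c) else None).

Lemma step_cell c i :
  cellAt (tm_step c) i = CA (cellAt c (i - 1)) (cellAt c i) (cellAt c (i + 1)).
Proof.
rewrite /tm_step /CA /inR /inL /cellAt /=.
case: c => q t h /=.
case Hh: ((q == tm_acc M) || (q == tm_rej M)) => /=.
  have Hq : hlt q by [].
  case: (eqVneq i h) => [->|Hi] /=; first by rewrite Hq.
  by case: ifP => _ /=; rewrite ?Hq //; case: ifP => _ /=; rewrite ?Hq.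
have Hq : hlt q = false by [].
case Hd: (tm_delta q (t h)) => [[q' b] d] /=.
case: (eqVneq i h) => [->|Hi] /=.
  rewrite Hq Hd /=.
  by case: d {Hd} => /=; case: eqVneq => //; lia.
case: (eqVneq (i - 1) h) => [E|E] /=.
  rewrite Hq E Hd /=.
  have -> : (i + 1 == h) = false by apply/eqP; lia.
  by case: d {Hd} => /=; case: eqVneq => // ?; exfalso; lia.
case: (eqVneq (i + 1) h) => [E'|E'] /=.
  rewrite Hq E' Hd /=.
  by case: d {Hd} => /=; case: eqVneq => // ?; exfalso; lia.
by case: d {Hd} => /=; case: eqVneq => // ?; exfalso; lia.
Qed.


Fixpoint caf (l : C) (s : seq C) : seq C :=
  match s with
  | [::] => [::]
  | m :: s' => CA l m (head Bc s') :: caf m s'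
  end.

Lemma size_caf l s : size (caf l s) = size s.
Proof. by elim: s l => //= m s IH l; rewrite IH. Qed.

Definition win (lo : int) (N : nat) (c : tm_config M) : seq C :=
  [seq cellAt c (lo + (j%:Z)) | j <- iota 0 N].

Lemma size_win lo N c : size (win lo N c) = N.
Proof. by rewrite size_map size_iota. Qed.

Lemma caf_win_gen (c : tm_config M) (lo : int) (N j : nat) :
  cellAt c (lo + (j + N)%N%:Z) = Bc ->
  caf (cellAt c (lo + j%:Z - 1)) [seq cellAt c (lo + i%:Z) | i <- iota j N]
  = [seq cellAt (tm_step c) (lo + i%:Z) | i <- iota j N].
Proof.
elim: N j => [|N IH] j Hb //=.
have E1 : head Bc [seq cellAt c (lo + i%:Z) | i <- iota j.+1 N] = cellAt c (lo + j%:Z + 1).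
  case: N {IH} Hb => [|N] /= Hb.
    by rewrite -Hb; congr cellAt; lia.
  by congr cellAt; lia.
rewrite E1 step_cell; congr cons.
have -> : lo + j%:Z = lo + j.+1%:Z - 1 by lia.
apply: IH; rewrite -Hb; congr cellAt; lia.
Qed.

Lemma caf_win (c : tm_config M) (lo : int) (N : nat) :
  cellAt c (lo - 1) = Bc -> cellAt c (lo + N%:Z) = Bc ->
  caf Bc (win lo N c) = win lo N (tm_step c).
Proof.
move=> H1 H2; rewrite /win -{1}H1.
have -> : lo - 1 = lo + 0%N%:Z - 1 by lia.
by apply: caf_win_gen; rewrite -H2 add0n.
Qed.

Definition nohead (r : seq C) : bool := all (fun x => x.2 == None) r.

Lemma caf_nohead l s : l.2 = None -> nohead s -> caf l s = s.
Proof.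
elim: s l => //= m s IH l Hl /andP [/eqP Hm Hs].
rewrite IH // /CA Hm /inR Hl /inL.
by case: s {IH} Hs => //= x s /andP [/eqP -> _]; case: m Hm => ? ? /= ->.
Qed.

Definition Good1 (r : seq C) (c : tm_config M) (lo : int) : Prop :=
  [/\ r = win lo (size r) c,
      (forall i, (i < lo) || (lo + (size r)%:Z <= i) -> tmc_tape c i = tm_blank M)
    & (lo <= tmc_head c) && (tmc_head c < lo + (size r)%:Z)].

Definition Good (r : seq C) (c : tm_config M) (lo : int) := Good1 r c lo \/ nohead r.

Lemma step_tape (c : tm_config M) (i : int) : i != tmc_head c -> tmc_tape (tm_step c) i = tmc_tape c i.
Proof.
rewrite /tm_step; case: ifP => // _.
case: (tm_delta _ _) => [[q b] d] /= Hi.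
by rewrite (negbTE Hi).
Qed.

Lemma step_head (c : tm_config M) :
  (tmc_head c - 1 <= tmc_head (tm_step c)) && (tmc_head (tm_step c) <= tmc_head c + 1).
Proof.
rewrite /tm_step; case: ifP => _; first by apply/andP; split; lia.
case: (tm_delta _ _) => [[q b] d] /=.
by case: d; apply/andP; split; lia.
Qed.

Lemma win_nohead (c : tm_config M) (lo : int) (N : nat) :
  (tmc_head c < lo) || (lo + N%:Z <= tmc_head c) -> nohead (win lo N c).
Proof.
move=> H; apply/allP => x /mapP [j]; rewrite mem_iota => /andP [_ Hj] ->.
rewrite /cellAt /=; case: (eqVneq (lo + j%:Z) (tmc_head c)) => // E; exfalso.
move: H Hj; rewrite -E; lia.
Qed.

Lemma good1_step (r : seq C) (c : tm_config M) (lo : int) :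
  Good1 r c lo ->
  [/\ caf Bc r = win lo (size r) (tm_step c),
      (forall i, (i < lo) || (lo + (size r)%:Z <= i) -> tmc_tape (tm_step c) i = tm_blank M)
    & (lo - 1 <= tmc_head (tm_step c)) && (tmc_head (tm_step c) <= lo + (size r)%:Z)].
Proof.
case=> Er Hout /andP [Hl Hr].
have Hs := step_head c.
split.
- rewrite {1}Er; apply: caf_win.
    rewrite /cellAt Hout; last by apply/orP; left; lia.
    by case: eqVneq => // E; exfalso; lia.
  rewrite /cellAt Hout; last by apply/orP; right; lia.
  by case: eqVneq => // E; exfalso; lia.
- move=> i Hi; rewrite step_tape ?Hout //; apply/eqP => E; move: Hi; rewrite E; lia.
- move: Hs; lia.
Qed.

Lemma good_step (r : seq C) (c : tm_config M) (lo : int) : Good r c lo -> Good (caf Bc r) (tm_step c) lo.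
Proof.
case=> [G|Hn]; last by right; rewrite caf_nohead.
have [E Hout Hh] := good1_step G.
have Hsz : size (caf Bc r) = size r by rewrite size_caf.
case: (boolP ((lo <= tmc_head (tm_step c)) && (tmc_head (tm_step c) < lo + (size r)%:Z))) => Hin.
  by left; split; rewrite Hsz // -E.
right; rewrite E; apply: win_nohead; move: Hh Hin; lia.
Qed.

Lemma good_iter n (r : seq C) (c : tm_config M) (lo : int) : Good r c lo -> Good (iter n (caf Bc) r) (iter n (@tm_step _ M) c) lo.
Proof. by elim: n => //= n IH /IH; apply: good_step. Qed.

Definition hasacc (r : seq C) : bool := has (fun x => x.2 == Some (tm_acc M)) r.

Lemma good1_hasacc (r : seq C) (c : tm_config M) (lo : int) : Good1 r c lo -> hasacc r = (tmc_state c == tm_acc M).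
Proof.
case=> Er _ Hh; rewrite Er /hasacc /win has_map.
apply/hasP/idP.
  by case=> j _; rewrite /preim /= /cellAt /=; case: ifP => //= _ /eqP [->].
move=> Hs; exists (absz (tmc_head c - lo)).
  rewrite mem_iota; move: Hh; lia.
rewrite /preim /= /cellAt /=.
have -> : lo + (absz (tmc_head c - lo))%:Z = tmc_head c by move: Hh; lia.
by rewrite eqxx /= (eqP Hs).
Qed.

Lemma good_acc (r : seq C) (c : tm_config M) (lo : int) : Good r c lo -> hasacc r -> tmc_state c = tm_acc M.
Proof.
case=> [G|Hn] Ha; first by apply/eqP; rewrite -(good1_hasacc G).
by case/hasP: Ha => x /(allP Hn) /eqP ->.
Qed.

Definition isym (w : seq Sigma) (j : nat) : tm_tape M :=
  if onth w j is Some a then tm_inp M a else tm_blank M.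

Definition initcells (w : seq Sigma) (n : nat) : seq C :=
  [seq (isym w j, if j == 0%N then Some (tm_start M) else None) | j <- iota 0 n].

Definition valid0 (w : seq Sigma) (r : seq C) : Prop :=
  exists k n, [/\ (0 < n)%N, (size w <= n)%N & r = nseq k Bc ++ initcells w n].

Lemma init_neg (w : seq Sigma) (i : int) : i < 0 -> tmc_tape (tm_init M w) i = tm_blank M.
Proof. by case: i. Qed.

Lemma init_pos (w : seq Sigma) (j : nat) : tmc_tape (tm_init M w) j%:Z = isym w j.
Proof. by []. Qed.

Lemma map_const (T U : eqType) (f : T -> U) (a : U) (s : seq T) :
  (forall x, x \in s -> f x = a) -> map f s = nseq (size s) a.
Proof.
elim: s => //= x s IH H; rewrite H ?mem_head // IH // => y Hy.
by apply: H; rewrite inE Hy orbT.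
Qed.

Lemma init_good (w : seq Sigma) k n : (0 < n)%N -> (size w <= n)%N ->
  Good1 (nseq k Bc ++ initcells w n) (tm_init M w) (- k%:Z).
Proof.
move=> Hn Hw.
rewrite /Good1 size_cat size_nseq /initcells size_map size_iota.
split.
- rewrite /win iotaD map_cat; congr cat.
    rewrite (@map_const _ _ _ Bc) ?size_iota // => j; rewrite mem_iota => /andP [_ Hj].
    rewrite /cellAt init_neg; last by lia.
    by case: eqVneq => //= E; exfalso; move: E; rewrite /tm_init /=; lia.
  have -> : iota (0 + k) n = [seq (k + i)%N | i <- iota 0 n] by rewrite add0n -iotaDl addn0.
  rewrite -map_comp; apply: eq_map => j /=.
  have -> : - k%:Z + (k + j)%N%:Z = j%:Z by lia.
  by rewrite /cellAt init_pos /=; congr pair; case: j.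
- move=> i /orP [Hi|Hi]; first by rewrite init_neg //; lia.
  have [m Em] : exists m : nat, i = m%:Z by exists (absz i); lia.
  rewrite Em init_pos /isym onth_default //.
  by move: Hi; rewrite Em; lia.
- rewrite /tm_init /=; apply/andP; split; lia.
Qed.

Lemma valid0_good (w : seq Sigma) (r : seq C) : valid0 w r -> exists lo, Good1 r (tm_init M w) lo.
Proof. by case=> k [n [Hn Hw ->]]; exists (- k%:Z); apply: init_good. Qed.

Definition crel (a b : seq C) : bool := b == caf Bc a.

Definition chain (w : seq Sigma) (rs : seq (seq C)) : Prop :=
  if rs is r0 :: rest then valid0 w r0 /\ path crel r0 rest else True.

Lemma path_acc (r0 : seq C) rest (c : tm_config M) (lo : int) :
  Good r0 c lo -> path crel r0 rest -> hasacc (last r0 rest) ->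
  exists n, tmc_state (iter n (@tm_step _ M) c) = tm_acc M.
Proof.
elim: rest r0 c => [|r1 rest IH] r0 c G /=.
  by move=> _ Ha; exists 0%N; apply: good_acc G Ha.
case/andP => /eqP E Hp Ha.
have G' : Good r1 (tm_step c) lo by rewrite E; apply: good_step.
have [n Hn] := IH _ _ G' Hp Ha.
by exists n.+1; rewrite iterSr.
Qed.

Lemma chain_accepts (w : seq Sigma) (rs : seq (seq C)) :
  chain w rs -> rs != [::] -> hasacc (last [::] rs) -> tm_accepts M w.
Proof.
case: rs => // r0 rest /= [V Hp] _ Ha.
have [lo G] := valid0_good V.
exact: (path_acc (or_introl G) Hp Ha).
Qed.


Lemma head_bound (w : seq Sigma) (i : nat) :
  (- i%:Z <= tmc_head (iter i (@tm_step _ M) (tm_init M w))) &&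
  (tmc_head (iter i (@tm_step _ M) (tm_init M w)) <= i%:Z).
Proof.
elim: i => [|i IH] /=; first by [].
have := step_head (iter i (@tm_step _ M) (tm_init M w)); move: IH; lia.
Qed.

Lemma path_iter (T : eqType) (f : T -> T) (x : T) (j m : nat) :
  path (fun a b => b == f a) (iter j f x) [seq iter i f x | i <- iota j.+1 m].
Proof.
elim: m j => [|m IH] j //.
change ((iter j.+1 f x == f (iter j f x)) && path (fun a b => b == f a) (iter j.+1 f x) [seq iter i f x | i <- iota j.+2 m]).
by rewrite eqxx /=; apply: IH.
Qed.

Lemma last_iter (T : Type) (f : T -> T) (x : T) (j m : nat) :
  last (iter j f x) [seq iter i f x | i <- iota j.+1 m] = iter (j + m) f x.
Proof.
elim: m j => [|m IH] j; first by rewrite addn0.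
change (last (iter j.+1 f x) [seq iter i f x | i <- iota j.+2 m] = iter (j + m.+1) f x).
by rewrite IH addSnnS.
Qed.

Lemma belast_iter (T : Type) (f : T -> T) (x : T) (j m : nat) :
  belast (iter j f x) [seq iter i f x | i <- iota j.+1 m] = [seq iter i f x | i <- iota j m].
Proof.
elim: m j => [|m IH] j //.
change (iter j f x :: belast (iter j.+1 f x) [seq iter i f x | i <- iota j.+2 m] =
  iter j f x :: [seq iter i f x | i <- iota j.+1 m]).
by rewrite IH.
Qed.

Lemma honest (w : seq Sigma) : tm_accepts M w ->
  exists r0 rest, [/\ valid0 w r0, path crel r0 rest,
     all (fun r => ~~ hasacc r) (belast r0 rest) & hasacc (last r0 rest)].
Proof.
case=> n0 Hn0.
have Hex : exists n, tmc_state (iter n (@tm_step _ M) (tm_init M w)) == tm_acc M.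
  by exists n0; rewrite Hn0.
case: (ex_minnP Hex) => m Hm Hmin.
pose k := m.+1; pose nn := (maxn 1 (size w) + m)%N.
pose r0 := nseq k Bc ++ initcells w nn.
have Hnn : (0 < nn)%N by rewrite /nn; lia.
have Hw : (size w <= nn)%N by rewrite /nn; lia.
have G0 := init_good k Hnn Hw.
have Hsz : size r0 = (k + nn)%N by rewrite size_cat size_nseq size_map size_iota.
have Gi : forall i, (i <= m)%N -> Good1 (iter i (caf Bc) r0) (iter i (@tm_step _ M) (tm_init M w)) (- k%:Z).
  elim=> [|i IH] Hi //=.
  have [E Hout Hh] := good1_step (IH (ltnW Hi)).
  have Hs : size (iter i (caf Bc) r0) = size r0.
    by elim: (i) => //= j IHj; rewrite size_caf IHj.
  split; rewrite size_caf //.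
  have := head_bound w i.+1; rewrite /= Hs Hsz /k /nn => HB.
  move: HB Hi; lia.
exists r0, [seq iter i (caf Bc) r0 | i <- iota 1 m]; split.
- by exists k, nn.
- exact: (path_iter (caf Bc) r0 0 m).
- rewrite (belast_iter (caf Bc) r0 0 m); apply/allP => r /mapP [i]; rewrite mem_iota => /andP [_ Hi] ->.
  rewrite (good1_hasacc (Gi i (ltnW Hi))); apply/negP => Ha.
  by have := Hmin i Ha; lia.
- rewrite (last_iter (caf Bc) r0 0 m) add0n (good1_hasacc (Gi m (leqnn m))); exact: Hm.
Qed.

End TMPart.

Inductive vst (T : Type) :=
 | VStart | VRec0 of bool & T & option T & bool
 | VRec of bool & T & option T & bool | VTest of bool & bool | VAcc | VRej.
Arguments VStart {T}. Arguments VAcc {T}. Arguments VRej {T}.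

Definition vcode (T : Type) :=
  (unit + (bool * T * option T * bool) + (bool * T * option T * bool) + (bool * bool) + bool)%type.
Definition vst_enc T (s : vst T) : vcode T :=
  match s with
  | VStart => inl (inl (inl (inl tt)))
  | VRec0 a b c d => inl (inl (inl (inr (a,b,c,d))))
  | VRec a b c d => inl (inl (inr (a,b,c,d)))
  | VTest a b => inl (inr (a,b))
  | VAcc => inr true
  | VRej => inr false end.
Definition vst_dec T (x : vcode T) : vst T :=
  match x with
  | inl (inl (inl (inl _))) => VStart
  | inl (inl (inl (inr (a,b,c,d)))) => VRec0 a b c d
  | inl (inl (inr (a,b,c,d))) => VRec a b c d
  | inl (inr (a,b)) => VTest _ a b
  | inr true => VAcc
  | inr false => VRej end.
Lemma vst_encK T : cancel (@vst_enc T) (@vst_dec T).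
Proof. by case. Qed.
HB.instance Definition _ (T : finType) := Finite.copy (vst T) (can_type (@vst_encK T)).

Definition col3 (x y z : rat) : 'cV[rat]_3 := \col_(i < 3) nth 0 [:: x; y; z] i.
Definition mxr (rows : seq (seq rat)) : 'M[rat]_3 :=
  \matrix_(i < 3, j < 3) nth 0 (nth [::] rows i) j.

Lemma mxr_mul a b c d e f g h k x y z :
  mxr [:: [:: a; b; c]; [:: d; e; f]; [:: g; h; k]] *m col3 x y z =
  col3 (a * x + b * y + c * z) (d * x + e * y + f * z) (g * x + h * y + k * z).
Proof.
apply/matrixP => i j; rewrite !mxE !big_ord_recl big_ord0 !mxE /=.
by case: i => [[|[|[|n]]] Hi] /=; [ring|ring|ring|move: Hi].
Qed.

Lemma mxr_affine a b c d e f g h k :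
  a + d + g = 1 -> b + e + h = 1 -> c + f + k = 1 ->
  affine_op (mxr [:: [:: a; b; c]; [:: d; e; f]; [:: g; h; k]]).
Proof.
move=> H1 H2 H3 j; rewrite !big_ord_recl big_ord0 !mxE /= addr0.
by case: j => [[|[|[|n]]] Hj] /=; [rewrite addrA|rewrite addrA|rewrite addrA|move: Hj].
Qed.

Lemma col3_eq x y z x' y' z' : x = x' -> y = y' -> z = z' -> col3 x y z = col3 x' y' z'.
Proof. by move=> -> -> ->. Qed.

Lemma col3E x y z (i : 'I_3) : col3 x y z i ord0 = nth 0 [:: x; y; z] i.
Proof. by rewrite mxE. Qed.

Definition stdv (x y : rat) : 'cV[rat]_3 := col3 x y (1 - x - y).

Lemma delta2 : delta_mx (inord 2 : 'I_3) (ord0 : 'I_1) = stdv 0 0.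
Proof.
apply/matrixP => i j; rewrite !mxE /= (ord1 j) eqxx andbT.
have -> : (i == inord 2) = (val i == 2%N) by rewrite -(inj_eq val_inj) /= inordK.
by case: i => [[|[|[|?]]] ?] //=; rewrite subr0.
Qed.

Lemma stdv_affine x y : affine_vec (stdv x y).
Proof. by rewrite /affine_vec !big_ord_recl big_ord0 !mxE /=; ring. Qed.

Section Verif.
Variables (Sigma : finType) (M : TM Sigma) (K : rat).

Local Notation C := (C M).
Local Notation Bc := (Bc M).

Definition base : nat := #|C|.+1.
Definition digit (c : C) : nat := (enum_rank c).+1.
Definition hor (s : seq C) : nat := foldl (fun x c => x * base + digit c)%N 0%N s.

Lemma hor_rcons s c : hor (rcons s c) = (hor s * base + digit c)%N.
Proof. by rewrite /hor foldl_rcons. Qed.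

Lemma digit_lt c : (0 < digit c < base)%N.
Proof. by rewrite /digit /base; apply/andP; split => //; rewrite ltnS; apply: ltn_ord. Qed.

Lemma hor_inj s1 s2 : hor s1 = hor s2 -> s1 = s2.
Proof.
elim/last_ind: s1 s2 => [|s1 c1 IH] s2; case/lastP: s2 => [|s2 c2] //.
- have -> : hor [::] = 0%N by [].
  by rewrite hor_rcons => E; exfalso; move: E; have := digit_lt c2; lia.
- have -> : hor [::] = 0%N by [].
  by rewrite hor_rcons => E; exfalso; move: E; have := digit_lt c1; lia.
rewrite !hor_rcons => E.
have Hb : (0 < base)%N by [].
have E1 : digit c1 = digit c2.
  have := congr1 (modn^~ base) E.
  by rewrite !modnMDl !modn_small //; [case/andP: (digit_lt c2)|case/andP: (digit_lt c1)].
have E2 : hor s1 = hor s2.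
  by move: E; rewrite E1 => /eqP; rewrite eqn_add2r eqn_mul2r => /orP [/eqP|/eqP] //.
rewrite (IH _ E2); congr rcons.
by apply: enum_rank_inj; apply: val_inj; move: E1; rewrite /digit => -[].
Qed.

Definition opHX (d : rat) : 'M[rat]_3 :=
  mxr [:: [:: base%:R + d; d; d]; [:: 0; 1; 0]; [:: 1 - base%:R - d; - d; 1 - d]].
Definition opHY (d : rat) : 'M[rat]_3 :=
  mxr [:: [:: 1; 0; 0]; [:: d; base%:R + d; d]; [:: - d; 1 - base%:R - d; 1 - d]].
Definition opPrep : 'M[rat]_3 :=
  mxr [:: [:: K; - K; 0]; [:: - K; K; 0]; [:: 1; 1; 1]].
Definition prepv (x y : rat) : 'cV[rat]_3 := col3 (K * (x - y)) (- (K * (x - y))) 1.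

Lemma opHX_stdv d x y : opHX d *m stdv x y = stdv (base%:R * x + d) y.
Proof. by rewrite /opHX /stdv mxr_mul; apply: col3_eq; ring. Qed.
Lemma opHY_stdv d x y : opHY d *m stdv x y = stdv x (base%:R * y + d).
Proof. by rewrite /opHY /stdv mxr_mul; apply: col3_eq; ring. Qed.
Lemma opPrep_stdv x y : opPrep *m stdv x y = prepv x y.
Proof. by rewrite /opPrep /prepv /stdv mxr_mul; apply: col3_eq; ring. Qed.

Inductive adesc := AId | AHX of nat | AHY of nat | APrep | AW.

Definition act_of (a : adesc) : raction 3 :=
  match a with
  | AId => Apply 1%:M
  | AHX d => Apply (opHX d%:R)
  | AHY d => Apply (opHY d%:R)
  | APrep => Apply opPrep
  | AW => Weigh
  end.

Lemma act_affine a : match act_of a with Apply A => affine_op A | Weigh => True end.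
Proof.
case: a => //=.
- by move=> j; rewrite (bigD1 j) //= mxE eqxx big1 ?addr0 // => i /negbTE; rewrite mxE => ->.
- by move=> d; apply: mxr_affine; ring.
- by move=> d; apply: mxr_affine; ring.
- by apply: mxr_affine; ring.
Qed.

Definition tsymc (a : tsym Sigma) : tm_tape M :=
  if a is Sym x then tm_inp M x else tm_blank M.
Definition isREnd (a : tsym Sigma) : bool := if a is REnd then true else false.
Definition isacc (c : C) : bool := c.2 == Some (tm_acc M).
Definition shift (p2 : C) (p1 : option C) (c : C) : C * option C :=
  if p1 is Some m then (m, Some c) else (p2, Some c).
Definition emitd (p2 : C) (p1 : option C) (c : C) : adesc :=
  if p1 is Some m then AHX (digit (CA p2 m c)) else AId.

Definition desc (q : vst C) (a : tsym Sigma) (g : option C) (r : bool) : adesc :=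
  match q with
  | VRec0 _ p2 p1 _ => if r then AId else emitd p2 p1 (odflt Bc g)
  | VRec par p2 p1 _ =>
      if r == par then emitd p2 p1 (odflt Bc g)
      else (if g is Some c then AHY (digit c) else APrep)
  | VTest tpar _ => if r == tpar then AW else AId
  | _ => AId
  end.

Definition outc : finType := {dffun forall r : bool, option 'I_((fun _ : bool => 3%N) r)}.

Definition oclean (q : vst C) (a : tsym Sigma) (g : option C) : outc :=
  [ffun r => if desc q a g r is AW then Some (inord 2) else None].

Definition nextc (q : vst C) (a : tsym Sigma) (g : option C) : vst C * hmove :=
  match q with
  | VStart => (VRec0 false Bc None false, MoveR)
  | VRec0 seen p2 p1 acc =>
      match g with
      | Some c =>
          let acc' := acc || isacc c in
          let p := shift p2 p1 c in
          if ~~ seen then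
            (if c == Bc then (VRec0 false p.1 p.2 acc', MoveS)
             else if c == (tsymc a, Some (tm_start M)) then (VRec0 true p.1 p.2 acc', MoveR)
             else (VRej, MoveS))
          else if c == (tsymc a, None) then (VRec0 true p.1 p.2 acc', MoveR)
          else (VRej, MoveS)
      | None =>
          if seen && isREnd a then ((if acc then VAcc else VRec true Bc None false), MoveS)
          else (VRej, MoveS)
      end
  | VRec par p2 p1 acc =>
      match g with
      | Some c => let p := shift p2 p1 c in (VRec par p.1 p.2 (acc || isacc c), MoveS)
      | None => (VTest _ (~~ par) acc, MoveS)
      end
  | VTest tpar acc => ((if acc then VAcc else VRec tpar Bc None false), MoveS)
  | VAcc => (VAcc, MoveS)
  | VRej => (VRej, MoveS)
  end.

Definition vnext (q : vst C) (a : tsym Sigma) (g : option C) (o : outc) : vst C * hmove :=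
  if o == oclean q a g then nextc q a g else (VRej, MoveS).

Definition TheV : Verifier Sigma := {|
  v_state := vst C;
  v_comm := option C;
  v_reg := bool;
  v_dim := fun _ => 3%N;
  v_init_reg := fun _ => stdv 0 0;
  v_start := VStart;
  v_acc := fun q => q == VAcc;
  v_rej := fun q => q == VRej;
  v_act := fun q a g r => act_of (desc q a g r);
  v_next := vnext |}.

Lemma TheV_wf : wf_verifier TheV.
Proof.
split; first by move=> r; apply: stdv_affine.
split; first by move=> q a g r; apply: act_affine.
by move=> q /=; case: q.
Qed.

End Verif.

Section ProbPart.
Variables (Sigma : finType) (V : Verifier Sigma).
Variable ocl : v_state V -> tsym Sigma -> v_comm V -> outcome V.
Hypothesis Hrej : forall q a g o, o != ocl q a g -> v_rej V (v_next V q a g o).1.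
Hypothesis Hex : forall q, ~~ (v_acc V q && v_rej V q).
Variables (P : prover V) (w : seq Sigma).

Definition chld (c : vconfig V) (o : outcome V) : vconfig V :=
  let a := tape_at w (cf_head c) in
  let g := P w (cf_hist c) in
  let acts := v_act V (cf_state c) a g in
  let: (q', m) := v_next V (cf_state c) a g o in
  VConfig q' (move_head w (cf_head c) m)
    (fun r => upd_reg (acts r) (o r) (cf_regs c r))
    (rcons (cf_hist c) (cf_state c, cf_head c, g, o)).

Definition opr (c : vconfig V) (o : outcome V) : rat :=
  out_prob (v_act V (cf_state c) (tape_at w (cf_head c)) (P w (cf_hist c))) (cf_regs c) o.

Definition oclc (c : vconfig V) : outcome V :=
  ocl (cf_state c) (tape_at w (cf_head c)) (P w (cf_hist c)).

Definition cstep (b : vconfig V * rat) : vconfig V * rat :=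
  let: (c, p) := b in
  if halted (cf_state c) then (c, p) else (chld c (oclc c), p * opr c (oclc c)).

Definition clw (t : nat) := iter t cstep (vinit V, 1).

Lemma bs_eq c p : ~~ halted (cf_state c) ->
  branch_step P w (c, p) = [seq (chld c o, p * opr c o) | o <- enum (outcome V)].
Proof. by move=> H; rewrite /branch_step (negbTE H). Qed.

Definition bad (b : vconfig V * rat) : bool := (b.2 == 0) || v_rej V (cf_state b.1).

Lemma bad_step b : bad b -> all bad (branch_step P w b).
Proof.
case: b => c p Hb.
case: (boolP (halted (cf_state c))) => Hh.
  by rewrite /branch_step Hh /= Hb.
rewrite bs_eq // all_map; apply/allP => o _ /=.
move: Hb; rewrite /bad /=; case/orP => [/eqP ->|Hr]; first by rewrite mul0r eqxx.
by move: Hh; rewrite /halted Hr orbT.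
Qed.

Lemma all_bad_flat s : all bad s -> all bad (flatten [seq branch_step P w b | b <- s]).
Proof.
elim: s => //= b s IH /andP [Hb Hs].
by rewrite all_cat bad_step // IH.
Qed.

Lemma vdist_shape t : exists s1 s2,
  vdist P w t = s1 ++ clw t :: s2 /\ all bad (s1 ++ s2).
Proof.
elim: t => [|t [s1 [s2 [E Hb]]]]; first by exists [::], [::].
rewrite all_cat in Hb; case/andP: Hb => Hb1 Hb2.
have -> : vdist P w t.+1 = flatten [seq branch_step P w b | b <- vdist P w t] by [].
rewrite E map_cat flatten_cat /= .
case: (clw t) => c p.
case: (boolP (halted (cf_state c))) => Hh.
  exists (flatten [seq branch_step P w b | b <- s1]), (flatten [seq branch_step P w b | b <- s2]).
  rewrite /branch_step Hh /= /cstep Hh; split; first by [].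
  by rewrite all_cat !all_bad_flat.
rewrite bs_eq // /cstep (negbTE Hh).
have Hin : oclc c \in enum (outcome V) by rewrite mem_enum.
have Hu := enum_uniq (outcome V).
case/splitPr: Hin Hu => e1 e2 Hu.
exists (flatten [seq branch_step P w b | b <- s1] ++ [seq (chld c o, p * opr c o) | o <- e1]).
exists ([seq (chld c o, p * opr c o) | o <- e2] ++ flatten [seq branch_step P w b | b <- s2]).
split; first by rewrite map_cat /= -!catA.
rewrite !all_cat !all_bad_flat //= andbT.
have Hx : oclc c \notin e1 ++ e2.
  by move: Hu; rewrite uniq_catC /= => /andP [H _]; rewrite mem_cat orbC -mem_cat.
have Hn : forall o, o \in e1 ++ e2 -> o != oclc c.
  by move=> o Ho; apply/eqP => Eo; rewrite -Eo Ho in Hx.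
have Hbad : forall o, o \in e1 ++ e2 -> bad (chld c o, p * opr c o).
  move=> o Ho; apply/orP; right; rewrite /chld /=.
  have := Hrej (Hn o Ho); rewrite /oclc.
  by case: (v_next V _ _ _ o).
by apply/andP; split; rewrite all_map; apply/allP => o Ho; apply: Hbad; rewrite mem_cat Ho ?orbT.
Qed.

Lemma acc_eq t :
  acc_prob_by P w t = if v_acc V (cf_state (clw t).1) then (clw t).2 else 0.
Proof.
have [s1 [s2 [E Hb]]] := vdist_shape t.
rewrite /acc_prob_by E big_cat big_cons /=.
have H0 : forall s, all bad s -> \sum_(b <- s | v_acc V (cf_state b.1)) b.2 = 0.
  elim=> [|b s IH] /=; first by rewrite big_nil.
  case/andP=> Hb0 Hs; rewrite big_cons IH //; case: ifP => Ha; last by [].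
  move: Hb0; rewrite /bad => /orP [/eqP ->|Hr]; first by rewrite addr0.
  by have := Hex (cf_state b.1); rewrite Ha Hr.
rewrite all_cat in Hb; case/andP: Hb => Hb1 Hb2.
by rewrite !H0 // add0r addr0.
Qed.

End ProbPart.

Section Ghost.
Variables (Sigma : finType) (M : TM Sigma) (K : rat) (w : seq Sigma).

Local Notation C := (C M).
Local Notation Bc := (Bc M).
Local Notation hor := (@hor _ M).
Local Notation caf := (@caf _ M).
Local Notation chain := (@chain _ M).
Local Notation hasacc := (@hasacc _ M).
Local Notation initcells := (@initcells _ M).
Local Notation isym := (@isym _ M).
Local Notation isacc := (@isacc _ M).
Local Notation tsymc := (@tsymc _ M).
Local Notation shift := (@shift _ M).
Local Notation nextc := (@nextc _ M).

Definition sfold (st : C * option C * seq C) (c : C) : C * option C * seq C :=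
  let: (p2, p1, em) := st in
  if p1 is Some m then (m, Some c, rcons em (CA p2 m c)) else (p2, Some c, em).

Definition sst (s : seq C) := foldl sfold (Bc, None, [::]) s.

Definition fin (p2 : C) (p1 : option C) : seq C :=
  if p1 is Some m then [:: CA p2 m Bc] else [::].

Lemma sst_rcons s c : sst (rcons s c) = sfold (sst s) c.
Proof. by rewrite /sst foldl_rcons. Qed.

Lemma sfold_gen (l m : C) (em : seq C) s :
  let st := foldl sfold (l, Some m, em) s in
  st.2 ++ fin st.1.1 st.1.2 = em ++ caf l (m :: s).
Proof.
elim: s l m em => [|c s IH] l m em /=; first by [].
by rewrite IH /= cat_rcons.
Qed.

Lemma sst_fin s : (sst s).2 ++ fin (sst s).1.1 (sst s).1.2 = caf Bc s.
Proof. case: s => [|c s] //=; exact: (sfold_gen Bc c [::] s). Qed.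

Lemma sst_none s : (sst s).1.2 = None -> s = [::].
Proof.
case/lastP: s => // s c; rewrite sst_rcons /sfold.
by case: (sst s) => [[p2 p1] em]; case: p1.
Qed.

Lemma sst_nil : sst [::] = (Bc, None, [::]).
Proof. by []. Qed.

Record gh := GH { gst : vst C; ghd : nat; grs : seq (seq C); gcur : seq C; gok : bool }.

Definition haltq (q : vst C) : bool := (q == VAcc) || (q == VRej).

Definition regsOf (G : gh) (r : bool) : 'cV[rat]_3 :=
  match gst G with
  | VRec0 _ _ _ _ => if r then stdv 0 0 else stdv (hor (sst (gcur G)).2)%:R 0
  | VRec par _ _ _ =>
      if r == par then stdv (hor (sst (gcur G)).2)%:R 0
      else stdv (hor (caf Bc (last [::] (grs G))))%:R (hor (gcur G))%:R
  | VTest tpar _ =>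
      if r == tpar then prepv K (hor (caf Bc (last [::] (grs G))))%:R (hor (gcur G))%:R
      else stdv (hor (caf Bc (gcur G)))%:R 0
  | _ => stdv 0 0
  end.

Definition stepG (G : gh) (g : option C) : gh :=
  let a := tape_at w (ghd G) in
  let nx := nextc (gst G) a g in
  GH nx.1 (move_head w (ghd G) nx.2)
    (match gst G, g with
     | VRec0 _ _ _ _, None => [:: gcur G]
     | VTest _ _, _ => rcons (grs G) (gcur G)
     | _, _ => grs G end)
    (match gst G, g with
     | VRec0 _ _ _ _, Some c => rcons (gcur G) c
     | VRec _ _ _ _, Some c => rcons (gcur G) c
     | VRec0 _ _ _ _, None => [::]
     | VTest _ _, _ => [::]
     | _, _ => gcur G end)
    (match gst G with
     | VTest _ _ => gok G && (hor (caf Bc (last [::] (grs G))) == hor (gcur G))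
     | _ => gok G end).

Definition Inv (G : gh) : Prop :=
  match gst G with
  | VStart => [/\ ghd G = 0%N, grs G = [::], gcur G = [::] & gok G]
  | VRec0 seen p2 p1 acc =>
      [/\ grs G = [::], gok G, (p2, p1) = (sst (gcur G)).1, acc = hasacc (gcur G) &
        if seen then exists k n, [/\ (0 < n)%N, gcur G = nseq k Bc ++ initcells w n
                                   & ghd G = minn n.+1 (size w).+1]
        else exists k, gcur G = nseq k Bc /\ ghd G = 1%N]
  | VRec par p2 p1 acc =>
      [/\ grs G != [::], par = odd (size (grs G)), (p2, p1) = (sst (gcur G)).1,
          acc = hasacc (gcur G) & gok G -> chain w (grs G)]
  | VTest tpar acc =>
      [/\ grs G != [::], tpar = ~~ odd (size (grs G)), acc = hasacc (gcur G)
          & gok G -> chain w (grs G)]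
  | VAcc => gok G -> [/\ chain w (grs G), grs G != [::] & hasacc (last [::] (grs G))]
  | VRej => True
  end.

Lemma tsym_at (n : nat) :
  tsymc (tape_at w (minn n.+1 (size w).+1)) = isym w n.
Proof.
rewrite /tape_at /isym /tsymc.
case: (leqP (size w) n) => H.
  have -> : minn n.+1 (size w).+1 = (size w).+1 by lia.
  by rewrite /= (onth_default (leqnn _)) onth_default.
have -> : minn n.+1 (size w).+1 = n.+1 by lia.
by rewrite /=; case: (onth w n).
Qed.

Lemma isREnd_at (n : nat) :
  isREnd (tape_at w (minn n.+1 (size w).+1)) = (size w <= n)%N.
Proof.
rewrite /tape_at /isREnd.
case: (leqP (size w) n) => H.
  have -> : minn n.+1 (size w).+1 = (size w).+1 by lia.
  by rewrite /= (onth_default (leqnn _)).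
have -> : minn n.+1 (size w).+1 = n.+1 by lia.
rewrite /=; case E: (onth w n) => [a|] //.
by have := onthNE w n; rewrite E /=; lia.
Qed.

Lemma initcellsS n : (0 < n)%N ->
  initcells w n.+1 = rcons (initcells w n) (isym w n, None).
Proof.
move=> Hn; rewrite /initcells -addn1 iotaD map_cat cats1 /=.
by case: n Hn.
Qed.

Lemma chain_rcons (rs : seq (seq C)) x :
  rs != [::] -> chain w rs -> x = caf Bc (last [::] rs) -> chain w (rcons rs x).
Proof.
case: rs => // r0 rest _ /= [V Hp] Hx; split => //.
by rewrite rcons_path Hp /crel Hx eqxx.
Qed.

Lemma hasacc_rcons s c : hasacc (rcons s c) = hasacc s || isacc c.
Proof. by rewrite /hasacc has_rcons orbC. Qed.

Lemma Inv_step G g : Inv G -> ~~ haltq (gst G) -> Inv (stepG G g).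
Proof.
rewrite /Inv /stepG.
case: G => [q hd rs cur ok] /=.
case: q => [|seen p2 p1 acc|par p2 p1 acc|tpar acc| |] //= HI _.
- case: HI => -> -> -> Hok /=; split => //; exists 0%N; split => //.
  by rewrite /move_head; lia.
- case: HI => Hrs Hok Hp Ha Hs.
  case: g => [c|] /=.
    have Hsst : (shift p2 p1 c) = (sst (rcons cur c)).1.
      by rewrite sst_rcons; case: (sst cur) Hp => [[a b] e] /= [-> ->]; case: b.
    case: seen Hs => [[k [n [Hn Hc Hh]]]|[k [Hc Hh]]] /=.
      case: ifP => [/eqP Ec|_] //=.
      split => //; first by case: (shift p2 p1 c) Hsst.
        by rewrite hasacc_rcons Ha.
      exists k, n.+1; split => //.
        by rewrite initcellsS // -rcons_cat Ec Hc Hh tsym_at.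
      by rewrite /move_head Hh; lia.
    case: ifP => [/eqP Ec|_] /=.
      split => //; first by case: (shift p2 p1 c) Hsst.
        by rewrite hasacc_rcons Ha.
      by exists k.+1; rewrite Hc Ec; split => //; elim: (k) => //= j ->.
    case: ifP => [/eqP Ec|_] //=.
    split => //; first by case: (shift p2 p1 c) Hsst.
      by rewrite hasacc_rcons Ha.
    exists k, 1%N; split => //.
      rewrite Hc Ec Hh cats1; congr rcons.
      have -> : tape_at w 1 = (if onth w 0 is Some a then Sym a else REnd) by [].
      by rewrite /tsymc /isym; case: (onth w 0).
    by rewrite Hh /move_head; lia.
  case: seen Hs => [[k [n [Hn Hc Hh]]]|//] /=.
  rewrite Hh isREnd_at; case: ifP => // Hw.
  case: acc Ha => Ha /=.
    move=> _; split => //=; split => //; exists k, n; split => //.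
  by split => //; move=> _ /=; split => //; exists k, n; split => //.
- case: HI => Hrs Hpar Hp Ha Hc.
  case: g => [c|] /=.
    have Hsst : (shift p2 p1 c) = (sst (rcons cur c)).1.
      by rewrite sst_rcons; case: (sst cur) Hp => [[a b] e] /= [-> ->]; case: b.
    split => //; first by case: (shift p2 p1 c) Hsst.
    by rewrite hasacc_rcons Ha.
  by split => //; rewrite Hpar.
- case: HI => Hrs Hpar Ha Hc.
  have Hch : ok && (hor (caf Bc (last [::] rs)) == hor cur) -> chain w (rcons rs cur).
    case/andP => /Hc Hch /eqP /hor_inj E.
    by apply: chain_rcons => //; rewrite E.
  case: acc Ha => Ha /=.
    move=> Hok; split => //; first by apply: Hch.
      by rewrite -cats1; case: (rs).
    by rewrite last_rcons.
  split => //; first by case: (rs).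
  by rewrite size_rcons /= Hpar.
Qed.


Local Notation act := (@act_of _ M K).
Local Notation stdv := stdv.

Lemma upd_id o v : upd_reg (act AId) o v = v.
Proof. by rewrite /= mul1mx. Qed.

Lemma emit_step (cur : seq C) (p2 : C) (p1 : option C) (c : C) o :
  (p2, p1) = (sst cur).1 ->
  upd_reg (act (emitd p2 p1 c)) o (stdv (hor (sst cur).2)%:R 0) =
  stdv (hor (sfold (sst cur) c).2)%:R 0.
Proof.
case: (sst cur) => [[a b] e] /= [-> ->].
case: b => [m|] /=; last by rewrite mul1mx.
rewrite opHX_stdv hor_rcons; congr stdv.
by rewrite natrD natrM mulrC.
Qed.

Lemma emit_flush (cur : seq C) (p2 : C) (p1 : option C) o :
  (p2, p1) = (sst cur).1 ->
  upd_reg (act (emitd p2 p1 Bc)) o (stdv (hor (sst cur).2)%:R 0) =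
  stdv (hor (caf Bc cur))%:R 0.
Proof.
move=> Hp; rewrite emit_step //.
rewrite -sst_fin.
case E: (sst cur) Hp => [[a b] e] /= _.
by case: b E => [m|] E /=; [rewrite cats1|rewrite cats0].
Qed.

Lemma hy_step x (cur : seq C) c o :
  upd_reg (act (AHY (digit c))) o (stdv x (hor cur)%:R) = stdv x (hor (rcons cur c))%:R.
Proof.
rewrite /= opHY_stdv hor_rcons; congr stdv.
by rewrite natrD natrM mulrC.
Qed.

Lemma regs_step G g r : Inv G -> ~~ haltq (gst G) -> ~~ haltq (gst (stepG G g)) ->
  upd_reg (act (desc (gst G) (tape_at w (ghd G)) g r))
    ((oclean (gst G) (tape_at w (ghd G)) g) r) (regsOf G r) =
  regsOf (stepG G g) r.
Proof.
rewrite /Inv /stepG /regsOf.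
case: G => [q hd rs cur ok] /=.
case: q => [|seen p2 p1 acc|par p2 p1 acc|tpar acc| |] //= HI _.
- case: HI => _ _ -> _ _; rewrite ?upd_id ?mul1mx.
  by case: r.
- case: HI => Hrs Hok Hp Ha Hs.
  case: g => [c|] /=.
    set nx := (if ~~ seen then _ else _).
    have [s' Hnx] : exists s', nx.1 = VRej \/ nx.1 = VRec0 s' (shift p2 p1 c).1 (shift p2 p1 c).2 (acc || isacc c).
      rewrite /nx; clear nx; case: seen {Hs} => /=.
        by case: ifP => _; [exists true; right|exists true; left].
      case: ifP => _; first by exists false; right.
      by case: ifP => _; [exists true; right|exists true; left].
    case: Hnx => -> //= _.
    case: r; first by rewrite ?upd_id ?mul1mx.
    by rewrite emit_step // sst_rcons.
  case: seen Hs => [Hs|Hs] /=; last by [].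
  case: ifP => // _; case: acc Ha => // Ha _ /=.
  case: r => /=; first by rewrite ?upd_id ?mul1mx.
  by rewrite emit_flush.
- case: HI => Hrs Hpar Hp Ha Hc.
  case: g => [c|] /=.
    move=> _; case: eqP => [->|Hr].
      by rewrite emit_step // sst_rcons.
    by rewrite hy_step.
  move=> _; case: eqP => [->|Hr].
    have -> : (par == ~~ par) = false by case: (par).
    by rewrite emit_flush.
  have -> : (r == ~~ par) = true by move: Hr; case: (r); case: (par).
  by rewrite /= opPrep_stdv.
- case: HI => _ _ Ha _; case: acc Ha => //= _ _.
  case: eqP => [->|Hr].
    by rewrite ffunE /= eqxx /=; exact: delta2.
  by rewrite ffunE /= mul1mx last_rcons.
Qed.

End Ghost.

Section Main.
Variables (Sigma : finType) (M : TM Sigma) (eps : rat).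
Hypothesis Heps : 0 < eps.
Let K := eps^-1.
Let V := TheV M K.
Variable w : seq Sigma.

Local Notation C := (C M).
Local Notation gh := (gh M).
Local Notation Bc := (Bc M).

Lemma out_prob_eq (q : vst C) (a : tsym Sigma) (g : option C) (regs : forall r : bool, 'cV[rat]_3) :
  out_prob (V := V) (fun r => act_of M K (desc q a g r)) regs (oclean q a g) =
  \prod_(r : bool) (if desc q a g r is AW then `|regs r (inord 2) ord0| / l1norm (regs r) else 1).
Proof. by apply: eq_bigr => r _; rewrite ffunE; case: (desc q a g r). Qed.

Lemma l1norm_prepv x y : l1norm (prepv K x y) = 2 * `|K * (x - y)| + 1.
Proof.
rewrite /l1norm !big_ord_recl big_ord0 !mxE /= normrN normr1 addr0.
by rewrite addrA mulr2n mulrDl !mul1r.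
Qed.

Lemma prepv2 x y : prepv K x y (inord 2) ord0 = 1.
Proof. by rewrite mxE inordK. Qed.

Definition tval (x y : nat) : rat := 1 / (2 * `|K * (x%:R - y%:R)| + 1).

Lemma tval_bounds x y : [/\ 0 <= tval x y <= 1, (x = y -> tval x y = 1) & (x <> y -> tval x y <= eps)].
Proof.
have HK : 0 < K by rewrite /K invr_gt0.
have Hd : 0 <= 2 * `|K * (x%:R - y%:R)| by rewrite mulr_ge0.
split.
- rewrite /tval; apply/andP; split; first by rewrite divr_ge0 // addr_ge0.
  rewrite ler_pdivrMr ?mul1r; last by rewrite ltr_wpDl.
  by rewrite lerDr.
- by move=> ->; rewrite /tval subrr mulr0 normr0 mulr0 add0r divr1.
- move=> Hxy; rewrite /tval ler_pdivrMr; last by rewrite ltr_wpDl.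
  have H1 : 1 <= `|(x%:R - y%:R : rat)|.
    have : x%:R - y%:R = ((x%:Z - y%:Z) : int)%:~R :> rat by rewrite rmorphB.
    move=> ->; rewrite -intr_norm ler1z -gtz0_ge1 normr_gt0 subr_eq0.
    by apply/eqP => -[].
  rewrite normrM (gtr0_norm HK) mulrDr mulr1 mulrA mulrA.
  have -> : eps * 2 * K = 2 by rewrite /K mulrAC mulfV ?gt_eqF // mul1r.
  move: H1 Heps; set t := `|_|; lra.
Qed.


Definition ocl : v_state V -> tsym Sigma -> v_comm V -> outcome V :=
  fun q a g => @oclean _ M q a g.

Lemma Hrej' q a g o : o != ocl q a g -> v_rej V (v_next V q a g o).1.
Proof. by move=> H; rewrite /= /vnext (negbTE H). Qed.

Lemma Hex' q : ~~ (v_acc V q && v_rej V q).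
Proof. by case: q. Qed.

Variable P : prover V.

Definition jstep (x : vconfig V * rat * gh) : vconfig V * rat * gh :=
  let: (c, p, G) := x in
  if halted (cf_state c) then x
  else (chld P w c (oclc ocl P w c), p * opr P w c (oclc ocl P w c),
        stepG w G (P w (cf_hist c))).

Definition G0 : gh := GH VStart 0 [::] [::] true.

Definition jrun (t : nat) := iter t jstep (vinit V, 1, G0).

Lemma jrun_fst t : (jrun t).1 = clw ocl P w t.
Proof.
elim: t => //= t IH; rewrite -IH.
by case: (jrun t) => [[c p] G] /=; case: ifP.
Qed.

Definition J (x : vconfig V * rat * gh) : Prop :=
  let: (c, p, G) := x in
  [/\ Inv w G, cf_state c = gst G,
      (~~ haltq (gst G) -> cf_head c = ghd G /\ forall r, cf_regs c r = regsOf K G r),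
      0 <= p <= 1 & (if gok G then p = 1 else p <= eps)].

Lemma chld_eq c o :
  chld P w c o =
  VConfig (v_next V (cf_state c) (tape_at w (cf_head c)) (P w (cf_hist c)) o).1
    (move_head w (cf_head c) (v_next V (cf_state c) (tape_at w (cf_head c)) (P w (cf_hist c)) o).2)
    (fun r => upd_reg (v_act V (cf_state c) (tape_at w (cf_head c)) (P w (cf_hist c)) r) (o r) (cf_regs c r))
    (rcons (cf_hist c) (cf_state c, cf_head c, P w (cf_hist c), o)).
Proof. by rewrite /chld; case: (v_next _ _ _ _ _). Qed.

Lemma prod_nontest (q : vst C) (a : tsym Sigma) (g : option C) (regs : bool -> 'cV[rat]_3) :
  (forall r, desc q a g r <> AW) ->
  \prod_(r : bool) (if desc q a g r is AW then `|regs r (inord 2) ord0| / l1norm (regs r) else 1) = 1.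
Proof.
move=> H; apply: big1 => r _.
by case E: (desc q a g r) => //; exfalso; apply: (H r).
Qed.

Lemma J_step x : J x -> J (jstep x).
Proof.
case: x => [[c p] G] [HI Hst Hrg Hp Hok] /=.
case: ifP => Hh //.
have HhG : ~~ haltq (gst G) by rewrite /haltq -Hst; move: Hh; rewrite /halted /= => ->.
have [Hhd Hr] := Hrg HhG.
set g := P w (cf_hist c).
have Ho : oclc ocl P w c = oclean (gst G) (tape_at w (ghd G)) g by rewrite /oclc Hst Hhd.
have Hnx : v_next V (cf_state c) (tape_at w (cf_head c)) g (oclc ocl P w c)
           = nextc (gst G) (tape_at w (ghd G)) g.
  by rewrite Ho Hst Hhd /= /vnext eqxx.
rewrite chld_eq -/g Hnx.
have Hop : opr P w c (oclc ocl P w c) =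
  \prod_(r : bool) (if desc (gst G) (tape_at w (ghd G)) g r is AW
                    then `|cf_regs c r (inord 2) ord0| / l1norm (cf_regs c r) else 1).
  by rewrite /opr Ho Hst Hhd; exact: out_prob_eq.
have [b [Hv01 Hgok Hb1 Hb0]] : exists b, [/\ 0 <= opr P w c (oclc ocl P w c) <= 1,
    gok (stepG w G g) = gok G && b,
    (b -> opr P w c (oclc ocl P w c) = 1) &
    (~~ b -> opr P w c (oclc ocl P w c) <= eps)].
  rewrite Hop; case E: (gst G) => [|s p2 p1 acc|par p2 p1 acc|tpar acc| |];
    try (by move: HhG; rewrite E).
  - exists true; rewrite big1 /stepG ?E ?andbT /=; first by split => //; rewrite ?ler01 ?lexx.
    by [].
  - exists true; rewrite big1 /stepG ?E ?andbT /=; first by split => //; rewrite ?ler01 ?lexx.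
    by move=> r _; case: r => //=; rewrite /emitd; case: (p1).
  - exists true; rewrite big1 /stepG ?E ?andbT /=; first by split => //; rewrite ?ler01 ?lexx.
    move=> r _; case: (r == par) => /=; first by rewrite /emitd; case: (p1).
    by case: (g).
  set x := hor (caf Bc (last [::] (grs G))).
  set y := hor (gcur G).
  exists (x == y).
  have Hreg : cf_regs c tpar = prepv K x%:R y%:R.
    by rewrite Hr /regsOf E eqxx.
  have -> : \prod_(r : bool) (if desc (VTest C tpar acc) (tape_at w (ghd G)) g r is AW
                    then `|cf_regs c r (inord 2) ord0| / l1norm (cf_regs c r) else 1) = tval x y.
    rewrite big_bool /= /tval.
    case: (tpar) Hreg => Hreg /=; rewrite Hreg prepv2 l1norm_prepv normr1 ?mulr1 ?mul1r //.
  have [H01 H1 H2] := tval_bounds x y.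
  split => //.
  - by rewrite /stepG E.
  - by move/eqP.
  - by move/eqP.
split.
- by apply: Inv_step.
- by [].
- move=> Hh'; split; first by rewrite /= Hhd.
  move=> r /=.
  rewrite Hr Ho Hst Hhd.
  exact: regs_step.
- apply/andP; split; first by rewrite mulr_ge0 //; case/andP: Hp; case/andP: Hv01.
  by rewrite mulr_ile1 //; case/andP: Hp; case/andP: Hv01.
- rewrite Hgok; case: (gok G) Hok => /= Hok.
    case: (b) Hb1 Hb0 => Hb1 Hb0.
      by rewrite Hok Hb1 // mul1r.
    by rewrite Hok mul1r; apply: Hb0.
  apply: le_trans Hok.
  by rewrite ler_piMr //; case/andP: Hp; case/andP: Hv01.
Qed.

End Main.

Section Blocks.
Variables (Sigma : finType) (M : TM Sigma) (w : seq Sigma).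

Local Notation C := (C M).
Local Notation gh := (gh M).
Local Notation Bc := (Bc M).
Local Notation stepG := (stepG w).
Local Notation hasacc := (@hasacc _ M).
Local Notation isym := (@isym _ M).
Local Notation tsym_at := (@tsym_at _ M).

Definition runG (G : gh) (s : seq (option C)) : gh :=
  foldl (fun G g => if haltq (gst G) then G else stepG G g) G s.

Lemma runG_cat G s1 s2 : runG G (s1 ++ s2) = runG (runG G s1) s2.
Proof. by rewrite /runG foldl_cat. Qed.

Lemma runG_halted G s : haltq (gst G) -> runG G s = G.
Proof. by move=> H; elim: s => //= g s IH; rewrite H. Qed.

Lemma runG_cons G g s : ~~ haltq (gst G) -> runG G (g :: s) = runG (stepG G g) s.
Proof. by move=> H; rewrite /= (negbTE H). Qed.

Lemma Inv_runG G s : Inv w G -> Inv w (runG G s).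
Proof.
elim: s G => //= g s IH G HG; apply: IH.
by case: ifP => // /negbT H; apply: Inv_step.
Qed.

Lemma blk_blanks k p2 p1 acc cur :
  exists p2' p1' acc',
    runG (GH (VRec0 false p2 p1 acc) 1 [::] cur true) (map Some (nseq k Bc)) =
    GH (VRec0 false p2' p1' acc') 1 [::] (cur ++ nseq k Bc) true.
Proof.
elim: k p2 p1 acc cur => [|k IH] p2 p1 acc cur.
  by exists p2, p1, acc; rewrite cats0.
rewrite -[nseq k.+1 Bc]/(Bc :: nseq k Bc) map_cons runG_cons // /stepG /= eqxx /=.
have [p2' [p1' [acc' ->]]] := IH (shift p2 p1 Bc).1 (shift p2 p1 Bc).2 (acc || isacc Bc) (rcons cur Bc).
by exists p2', p1', acc'; rewrite cat_rcons.
Qed.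

Lemma blk_headcell p2 p1 acc cur :
  exists p2' p1' acc',
    runG (GH (VRec0 false p2 p1 acc) 1 [::] cur true) [:: Some (isym w 0, Some (tm_start M))] =
    GH (VRec0 true p2' p1' acc') (minn 2 (size w).+1) [::] (rcons cur (isym w 0, Some (tm_start M))) true.
Proof.
rewrite /= /stepG /=.
have -> : ((isym w 0, Some (tm_start M)) == Bc) = false by apply/eqP; case.
have H := tsym_at w 0; rewrite (_ : minn 1 (size w).+1 = 1%N) in H; last by lia.
rewrite H eqxx /=.
by eexists; eexists; eexists.
Qed.

Lemma blk_seen j m p2 p1 acc cur :
  exists p2' p1' acc',
    runG (GH (VRec0 true p2 p1 acc) (minn j.+1 (size w).+1) [::] cur true)
      (map Some [seq (isym w i, None) | i <- iota j m]) =
    GH (VRec0 true p2' p1' acc') (minn (j + m).+1 (size w).+1) [::]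
      (cur ++ [seq (isym w i, None) | i <- iota j m]) true.
Proof.
elim: m j p2 p1 acc cur => [|m IH] j p2 p1 acc cur.
  by exists p2, p1, acc; rewrite addn0 cats0.
rewrite -[iota j m.+1]/(j :: iota j.+1 m) map_cons map_cons runG_cons // /stepG /= tsym_at eqxx /=.
have -> : minn (minn j.+1 (size w).+1).+1 (size w).+1 = minn j.+2 (size w).+1 by lia.
have [p2' [p1' [acc' ->]]] := IH j.+1 (shift p2 p1 (isym w j, None)).1 (shift p2 p1 (isym w j, None)).2
  (acc || isacc (isym w j, None)) (rcons cur (isym w j, None)).
by exists p2', p1', acc'; rewrite cat_rcons addSnnS.
Qed.

Lemma initcells_split n : (0 < n)%N ->
  initcells M w n = (isym w 0, Some (tm_start M)) :: [seq (isym w i, None) | i <- iota 1 n.-1].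
Proof.
case: n => // n _; rewrite /initcells /=.
by congr cons; apply/eq_in_map => j; rewrite mem_iota => /andP [Hj _]; case: j Hj.
Qed.

Lemma blk_pre0 k n : (0 < n)%N ->
  let r0 := nseq k Bc ++ initcells M w n in
  exists p2 p1 acc,
    runG (GH VStart 0 [::] [::] true) (None :: map Some r0) =
    GH (VRec0 true p2 p1 acc) (minn n.+1 (size w).+1) [::] r0 true.
Proof.
move=> Hn r0.
rewrite runG_cons // /stepG /=.
have -> : minn 1 (size w).+1 = 1%N by lia.
rewrite /r0 map_cat !runG_cat.
have [p2 [p1 [acc ->]]] := blk_blanks k Bc None false [::].
rewrite initcells_split // map_cons -cat1s runG_cat.
have [p2' [p1' [acc' ->]]] := blk_headcell p2 p1 acc ([::] ++ nseq k Bc).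
have [p2'' [p1'' [acc'' ->]]] := blk_seen 1 n.-1 p2' p1' acc' (rcons ([::] ++ nseq k Bc) (isym w 0, Some (tm_start M))).
exists p2'', p1'', acc''.
by rewrite add1n prednK // cat_rcons.
Qed.

Lemma blk_rec0 k n : (0 < n)%N -> (size w <= n)%N ->
  let r0 := nseq k Bc ++ initcells M w n in
  exists hd,
    runG (GH VStart 0 [::] [::] true) (None :: map Some r0 ++ [:: None]) =
    GH (if hasacc r0 then VAcc else VRec true Bc None false) hd [:: r0] [::] true.
Proof.
move=> Hn Hw r0.
have [p2 [p1 [acc E]]] := blk_pre0 k Hn.
have HI0 : Inv w (GH VStart 0 [::] [::] true : gh) by [].
have := Inv_runG (None :: map Some r0) HI0.
rewrite -/r0 in E; rewrite E => -[_ _ _ Ha _].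
rewrite -cat_cons runG_cat E.
rewrite /= /stepG /= isREnd_at Hw /= -Ha.
by exists (move_head w (minn n.+1 (size w).+1) MoveS); case: acc {Ha E}.
Qed.

Lemma blk_cells par p2 p1 acc hd rs cur ok (r : seq C) :
  exists p2' p1' acc',
    runG (GH (VRec par p2 p1 acc) hd rs cur ok) (map Some r) =
    GH (VRec par p2' p1' acc') hd rs (cur ++ r) ok.
Proof.
elim: r p2 p1 acc cur => [|c r IH] p2 p1 acc cur.
  by exists p2, p1, acc; rewrite cats0.
rewrite map_cons runG_cons // /stepG /=.
have [p2' [p1' [acc' ->]]] := IH (shift p2 p1 c).1 (shift p2 p1 c).2 (acc || isacc c) (rcons cur c).
by exists p2', p1', acc'; rewrite cat_rcons.
Qed.


Local Notation caf := (@caf _ M).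
Local Notation hor := (@hor _ M).
Local Notation crel := (@crel _ M).

Lemma blk_rec par hd rs ok (r : seq C) :
  Inv w (GH (VRec par Bc None false) hd rs [::] ok) ->
  runG (GH (VRec par Bc None false) hd rs [::] ok) (map Some r ++ [:: None; None]) =
  GH (if hasacc r then VAcc else VRec (~~ par) Bc None false) hd (rcons rs r) [::]
     (ok && (hor (caf Bc (last [::] rs)) == hor r)).
Proof.
move=> HI; rewrite runG_cat.
have [p2' [p1' [acc' E]]] := blk_cells par Bc None false hd rs [::] ok r.
have HI' := Inv_runG (map Some r) HI.
rewrite E in HI' *; case: HI' => _ _ _ Ha _.
rewrite /= /stepG /= Ha /=.
by case: (hasacc r).
Qed.

Definition blocks (rest : seq (seq C)) : seq (option C) :=
  flatten [seq map Some r ++ [:: None; None] | r <- rest].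

Lemma blk_rest (rest : seq (seq C)) : forall par hd pre,
  Inv w (GH (VRec par Bc None false) hd pre [::] true) ->
  ~~ hasacc (last [::] pre) ->
  path crel (last [::] pre) rest ->
  all (fun r => ~~ hasacc r) (belast (last [::] pre) rest) ->
  hasacc (last (last [::] pre) rest) ->
  let G' := runG (GH (VRec par Bc None false) hd pre [::] true) (blocks rest) in
  gst G' = VAcc /\ gok G'.
Proof.
elim: rest => [|r rest IH] par hd pre HI Hx Hp Hb Ha /=.
  by rewrite Ha in Hx.
case/andP: Hp => /eqP Er Hp.
case/andP: Hb => _ Hb.
rewrite /blocks /= runG_cat blk_rec // -/(blocks rest) Er eqxx /= -Er.
case: ifP => Har.
  by rewrite runG_halted.
apply: IH; rewrite ?last_rcons ?Har //.
have := Inv_runG (map Some r ++ [:: None; None]) HI.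
by rewrite blk_rec // Er eqxx /= -Er Har.
Qed.

Lemma complete_ghost (r0 : seq C) (rest : seq (seq C)) :
  @valid0 _ M w r0 -> path crel r0 rest ->
  all (fun r => ~~ hasacc r) (belast r0 rest) -> hasacc (last r0 rest) ->
  let G' := runG (GH VStart 0 [::] [::] true) (None :: map Some r0 ++ None :: blocks rest) in
  gst G' = VAcc /\ gok G'.
Proof.
case=> k [n [Hn Hw Er0]] Hp Hb Ha G'; rewrite {}/G'.
have -> : None :: map Some r0 ++ None :: blocks rest =
          (None :: map Some r0 ++ [:: None]) ++ blocks rest by rewrite /= -catA.
rewrite runG_cat.
have [hd E] := blk_rec0 k Hn Hw.
rewrite -Er0 in E; rewrite E.
have HI0 : Inv w (GH VStart 0 [::] [::] true : gh) by [].
have := Inv_runG (None :: map Some r0 ++ [:: None]) HI0.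
rewrite E; case: ifP => Har.
  by move=> _; rewrite runG_halted.
move=> HI; apply: (blk_rest HI) => //=; by rewrite Har.
Qed.

End Blocks.

From Stdlib Require Import ClassicalEpsilon.

Section Final.
Variables (Sigma : finType) (M : TM Sigma) (eps : rat).
Hypothesis Heps : 0 < eps.
Local Notation V := (TheV M eps^-1).
Local Notation C := (C M).

Lemma J_init w (P : prover V) : J w (vinit V, 1, G0 M).
Proof.
by split => //=; try (by move=> _; split => // r; case: r); rewrite ?ler01 ?lexx.
Qed.

Lemma J_run w (P : prover V) t : J w (jrun w P t).
Proof.
elim: t => [|t IH]; first exact: J_init.
by rewrite /jrun iterS; apply: J_step.
Qed.

Lemma sound w (P : prover V) : ~ tm_accepts M w -> acc_prob_le P w eps.
Proof.
move=> HL t.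
rewrite (acc_eq (@Hrej' _ M eps) (@Hex' _ M eps)) -jrun_fst.
have := J_run w P t.
case: (jrun w P t) => [[c p] G] [HI Hst _ Hp Hok] /=.
rewrite Hst; case: ifP => Ha; last exact: ltW.
move/eqP: Ha => Ha; rewrite /Inv Ha in HI.
case: (gok G) Hok HI => // Hok HI.
exfalso; apply: HL.
by have [Hc Hn Hh] := HI erefl; apply: (chain_accepts Hc Hn Hh).
Qed.

Definition hprop (w : seq Sigma) (x : seq C * seq (seq C)) : Prop :=
  [/\ valid0 w x.1, path (@crel _ M) x.1 x.2,
      all (fun r => ~~ hasacc r) (belast x.1 x.2) & hasacc (last x.1 x.2)].

Definition hdata (w : seq Sigma) : seq C * seq (seq C) :=
  epsilon (inhabits ([::], [::])) (hprop w).

Definition strm (w : seq Sigma) : seq (option C) :=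
  None :: map Some (hdata w).1 ++ None :: blocks (hdata w).2.

Definition Phon : prover V := fun w hist => nth None (strm w) (size hist).

Lemma jrun_ghost w t : (t <= size (strm w))%N ->
  (jrun w Phon t).2 = runG w (G0 M) (take t (strm w)) /\
  (~~ haltq (gst (jrun w Phon t).2) -> size (cf_hist (jrun w Phon t).1.1) = t).
Proof.
elim: t => [|t IH] Ht; first by rewrite take0.
have [IH1 IH2] := IH (ltnW Ht).
have HJ := J_run w Phon t.
rewrite /jrun iterS -/(jrun w Phon t).
rewrite (take_nth None Ht) /runG foldl_rcons -/(runG w (G0 M) (take t (strm w))) -IH1.
case: (jrun w Phon t) HJ IH1 IH2 => [[c p] G] [_ Hst _ _ _] /= IH1 IH2.
have Hh : halted (cf_state c) = haltq (gst G) by rewrite Hst.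
rewrite Hh; case: (boolP (haltq (gst G))) => HG /=.
  by split => //; rewrite HG.
have Hs := IH2 HG.
rewrite chld_eq /=; split; last by rewrite size_rcons Hs.
by rewrite /Phon Hs.
Qed.

Lemma complete w : tm_accepts M w -> acc_prob_ge Phon w 1.
Proof.
move=> Hacc d Hd.
have Hex : exists x, hprop w x.
  by have [r0 [rest H]] := honest Hacc; exists (r0, rest).
have [H1 H2 H3 H4] := epsilon_spec (inhabits ([::], [::])) (hprop w) Hex.
have [Gacc Gok] := complete_ghost H1 H2 H3 H4.
set T := size (strm w).
have [E _] := jrun_ghost (leqnn T).
rewrite take_size in E.
exists T.
rewrite (acc_eq (@Hrej' _ M eps) (@Hex' _ M eps)) -jrun_fst.
have := J_run w Phon T.
have Gacc' : gst (runG w (G0 M) (strm w)) = VAcc by exact: Gacc.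
have Gok' : gok (runG w (G0 M) (strm w)) by exact: Gok.
rewrite -E in Gacc' Gok'.
case: (jrun w Phon T) Gacc' Gok' => [[c p] G] /= Gacc' Gok' [_ Hst _ _ Hok].
rewrite Hst Gacc' eqxx.
rewrite Gok' in Hok; rewrite Hok.
by rewrite lerBlDr lerDl ltW.
Qed.

End Final.

Theorem theorem4 (Sigma : finType) (L : seq Sigma -> Prop) :
  TM_recognizable L ->
  forall eps : rat, 0 < eps -> eps < 1 / 2 ->
  exists V : Verifier Sigma, wf_verifier V /\ weakly_verifies_perfect V L eps.
Proof.
case=> M HM eps Heps _.
exists (TheV M eps^-1); split; first exact: TheV_wf.
split.
  by exists (Phon (M:=M) (eps:=eps)) => w /HM; apply: complete.
move=> w HnL P; apply: sound => // Hacc; apply: HnL.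
by apply/HM.
Qed.
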